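(* Let $f(z)=z+\sum_{n=2}^{\infty}a_nz^n$ belong to the class $\mathcal{S}_u^*$, and let its logarithmic coefficients $\gamma_n$ be defined by $\log\frac{f(z)}{z}=2\sum_{n=1}^{\infty}\gamma_nz^n$. Then $$|\gamma_1\gamma_3-\gamma_2^2|\le\frac1{16},$$ and the estimate is sharp, i.e. there exists a function $f\in\mathcal{S}_u^*$ for which equality holds.
   Context: $\mathbb{D}=\{z\in\mathbb{C}:|z|<1\}$. The class $\mathcal{S}_u^*$ consists of all analytic functions $f$ on $\mathbb{D}$ with $f(0)=0$, $f'(0)=1$ satisfying $\left|\frac{zf'(z)}{f(z)}-1\right|<1$ for all $z\in\mathbb{D}$ (such $f$ are univalent and starlike, so $f(z)/z$ is nonvanishing and $\log(f(z)/z)$ is taken as the branch vanishing at $0$). In terms of the coefficients, $\gamma_1\gamma_3-\gamma_2^2=\frac14\left(a_2a_4-a_3^2+\frac1{12}a_2^4\right)$; the quantity $\gamma_1\gamma_3-\gamma_2^2$ is called the second Hankel determinant of logarithmic coefficients, $H_{2,1}(\mathrm{F}_f/2)$. *)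

(* Defs.v *)
From Stdlib Require Import Reals Factorial.
From Coquelicot Require Import Coquelicot.
Open Scope R_scope.

Definition in_disk (z : C) : Prop := Cmod z < 1.

(* Analytic on D: given by a power series centred at 0 converging on all of D
   (for the disk this is equivalent to holomorphy on D, by Taylor's theorem). *)
Definition analytic_on_disk (f : C -> C) : Prop :=
  exists a : nat -> C, forall z, in_disk z ->
    is_pseries (K := C_AbsRing) (V := C_NormedModule) a z (f z).

Definition is_cexp (w e : C) : Prop :=
  is_pseries (K := C_AbsRing) (V := C_NormedModule)
    (fun k => RtoC (/ INR (Stdlib.Arith.Factorial.fact k))) w e.

Definition Su_star (f : C -> C) : Prop :=
  analytic_on_disk f /\ f (RtoC 0) = RtoC 0 /\
  is_derive (K := C_AbsRing) (V := C_NormedModule) f (RtoC 0) (RtoC 1) /\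
  forall z, in_disk z -> z <> RtoC 0 ->
    f z <> RtoC 0 /\
    exists f'z : C, is_derive (K := C_AbsRing) (V := C_NormedModule) f z f'z /\
      Cmod ((z * f'z / f z - 1)%C) < 1.

(* gam is the sequence of logarithmic coefficients of f:
   log (f z / z) = 2 * sum_{n>=1} gam n z^n on D, the branch of the logarithm
   vanishing at 0 (gam 0 = 0 encodes the sum starting at n = 1). *)
Definition log_coeffs (f : C -> C) (gam : nat -> C) : Prop :=
  gam 0%nat = RtoC 0 /\
  forall z, in_disk z -> exists L E : C,
    is_pseries (K := C_AbsRing) (V := C_NormedModule) gam z L /\
    is_cexp (2 * L)%C E /\ (E * z)%C = f z.

Definition H21 (gam : nat -> C) : C :=
  (gam 1%nat * gam 3%nat - gam 2%nat * gam 2%nat)%C.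

(* Main.v *)
Require Import Defs.
From Stdlib Require Import Reals Lra Lia Psatz ClassicalEpsilon Classical.
From Coquelicot Require Import Coquelicot.
Open Scope R_scope.

Definition Cser (a : nat -> C) (l : C) := is_series (K:=C_AbsRing) (V:=C_NormedModule) a l.

Lemma pow_n_C (z : C) n : pow_n (K:=C_AbsRing) z n = Cpow z n.
Proof. induction n; simpl; auto. Qed.

Lemma pseries_Cser a z l : is_pseries (K:=C_AbsRing) (V:=C_NormedModule) a z l <-> Cser (fun k => (z ^ k * a k)%C) l.
Proof.
  unfold is_pseries, Cser. split; intros H; (eapply is_series_ext; [|exact H]); intros n; rewrite <- pow_n_C; reflexivity.
Qed.

Lemma Cser_eps a l : Cser a l -> forall eps, 0 < eps -> exists N, forall n, (N <= n)%nat -> Cmod (sum_n a n - l) < eps.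
Proof.
  intros H eps Heps.
  assert (Hp : 0 < eps / norm_factor (V:=C_NormedModule)).
  { apply Rdiv_lt_0_compat; auto. apply norm_factor_gt_0. }
  destruct (H _ (locally_ball l (mkposreal _ Hp))) as [N HN].
  exists N. intros n Hn. specialize (HN n Hn).
  pose proof (norm_compat2 (K:=C_AbsRing) (V:=C_NormedModule) l (sum_n a n) _ HN) as HN'. clear HN. rename HN' into HN.
  replace eps with (norm_factor (V:=C_NormedModule) * (eps / norm_factor (V:=C_NormedModule))).
  assert (E: Cmod (sum_n a n - l) = norm (K:=C_AbsRing) (V:=C_NormedModule) (minus (sum_n a n) l)) by reflexivity.
  rewrite E. exact HN. field. apply Rgt_not_eq, norm_factor_gt_0.
Qed.

Lemma Cser_of_eps a l : (forall eps, 0 < eps -> exists N, forall n, (N <= n)%nat -> Cmod (sum_n a n - l) < eps) -> Cser a l.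
Proof.
  intros H P [e He]. destruct (H e (cond_pos e)) as [N HN].
  exists N. intros n Hn. apply He. apply (norm_compat1 (K:=C_AbsRing) (V:=C_NormedModule)). apply HN; auto.
Qed.

Lemma Cser_unique a l1 l2 : Cser a l1 -> Cser a l2 -> l1 = l2.
Proof. intros H1 H2. exact (filterlim_locally_unique _ _ _ H1 H2). Qed.
Lemma Cser_ext a b l : (forall n, a n = b n) -> Cser a l -> Cser b l.
Proof. intros E H. unfold Cser in *. eapply is_series_ext; [exact E|exact H]. Qed.

Lemma Cser_plus a b la lb : Cser a la -> Cser b lb -> Cser (fun n => a n + b n)%C (la + lb)%C.
Proof. intros Ha Hb. exact (is_series_plus _ _ _ _ Ha Hb). Qed.

Lemma Cser_minus a b la lb : Cser a la -> Cser b lb -> Cser (fun n => a n - b n)%C (la - lb)%C.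
Proof. intros Ha Hb. exact (is_series_minus _ _ _ _ Ha Hb). Qed.

Lemma Cser_scal c a l : Cser a l -> Cser (fun n => c * a n)%C (c * l)%C.
Proof. intros Ha. exact (is_series_scal_l (K:=C_AbsRing) (V:=C_NormedModule) c _ _ Ha). Qed.

Lemma sum_n_Cmod (a : nat -> C) n : Cmod (sum_n a n) <= sum_n (fun k => Cmod (a k)) n.
Proof.
  induction n.
  - rewrite !sum_O. lra.
  - rewrite !sum_Sn. eapply Rle_trans. apply Cmod_triangle.
    change (plus (sum_n (fun k : nat => Cmod (a k)) n) (Cmod (a (S n)))) with
      (sum_n (fun k : nat => Cmod (a k)) n + Cmod (a (S n))). lra.
Qed.

Lemma sum_n_le_series (b : nat -> R) Sb n : (forall k, 0 <= b k) -> is_series b Sb -> sum_n b n <= Sb.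
Proof.
  intros Hb HS.
  assert (Hl : is_lim_seq (sum_n b) Sb) by exact HS.
  apply is_lim_seq_incr_n with (N := n) in Hl.
  assert (H := is_lim_seq_le (fun _ => sum_n b n) (fun m => sum_n b (m + n)) (sum_n b n) Sb).
  simpl in H. apply H; auto.
  2: apply is_lim_seq_const.
  intros m. induction m. simpl. lra.
  simpl. rewrite sum_Sn. change (plus (sum_n b (m+n)%nat) (b (S (m+n)%nat))) with (sum_n b (m+n)%nat + b (S (m+n)%nat)).
  specialize (Hb (S (m+n)%nat)). lra.
Qed.

Lemma Cser_norm_le a l b Sb : (forall n, Cmod (a n) <= b n) -> is_series b Sb -> Cser a l -> Cmod l <= Sb.
Proof.
  intros Hab HS Ha.
  apply Rnot_lt_le. intros Hlt.
  destruct (Cser_eps a l Ha (Cmod l - Sb)) as [N HN]. lra.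
  specialize (HN N (le_n _)).
  assert (H1 : Cmod (sum_n a N) <= Sb).
  { eapply Rle_trans. apply sum_n_Cmod.
    eapply Rle_trans. 2: apply (sum_n_le_series b Sb N); auto.
    2: { intros k. eapply Rle_trans. apply Cmod_ge_0. apply Hab. }
    clear -Hab. induction N. rewrite !sum_O. apply Hab.
    rewrite !sum_Sn. change (plus (sum_n (fun k : nat => Cmod (a k)) N) (Cmod (a (S N)))) with
      (sum_n (fun k : nat => Cmod (a k)) N + Cmod (a (S N))).
    change (plus (sum_n b N) (b (S N))) with (sum_n b N + b (S N)). specialize (Hab (S N)). lra. }
  assert (H2 : Cmod l <= Cmod (sum_n a N) + Cmod (sum_n a N - l)).
  { replace l with (sum_n a N - (sum_n a N - l))%C at 1 by ring.
    eapply Rle_trans. apply Cmod_triangle. rewrite Cmod_opp. lra. }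
  lra.
Qed.

Lemma Cser_exists_abs a : ex_series (fun n => Cmod (a n)) -> exists l, Cser a l.
Proof.
  intros H.
  assert (H' : ex_series (K:=C_AbsRing) (V:=C_CompleteNormedModule) a).
  { apply (ex_series_le (K:=C_AbsRing) (V:=C_CompleteNormedModule) a (fun n => Cmod (a n))); auto.
    intros n. apply Rle_refl. }
  destruct H' as [l Hl]. exists l. exact Hl.
Qed.
Lemma lim_inv_Sn : is_lim_seq (fun n => / (INR n + 1)) 0.
Proof.
  assert (H : is_lim_seq (fun n => INR (S n)) p_infty).
  { apply (is_lim_seq_incr_1 INR p_infty). apply is_lim_seq_INR. }
  apply is_lim_seq_inv in H. 2: discriminate.
  eapply is_lim_seq_ext; [|exact H]. intros n. cbv beta. rewrite S_INR. reflexivity.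
Qed.

Lemma ser_sq_geom_pos q : 0 < q < 1 -> ex_series (fun n => (INR n + 1)^2 * q^n).
Proof.
  intros Hq.
  set (a := fun n => (INR n + 1)^2 * q^n).
  assert (Hpos : forall n, 0 < a n).
  { intros n. unfold a. apply Rmult_lt_0_compat. apply pow_lt. pose proof (pos_INR n). lra. apply pow_lt. lra. }
  assert (H : ex_series (fun n => Rabs (a n))).
  { apply (ex_series_DAlembert a q). lra. intros n. specialize (Hpos n). lra.
    assert (Hl : is_lim_seq (fun n => (1 + / (INR n + 1))^2 * q) ((1 + 0)^2 * q)).
    { apply is_lim_seq_mult'. 2: apply is_lim_seq_const.
      change ((1+0)^2) with ((1+0)*((1+0)*1)). 
      apply (is_lim_seq_ext (fun n => (1 + / (INR n + 1)) * ((1 + / (INR n + 1)) * 1))).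
      intros n. simpl. reflexivity.
      apply is_lim_seq_mult'. apply is_lim_seq_plus'. apply is_lim_seq_const. apply lim_inv_Sn.
      apply is_lim_seq_mult'. apply is_lim_seq_plus'. apply is_lim_seq_const. apply lim_inv_Sn.
      apply is_lim_seq_const. }
    replace q with ((1 + 0)^2 * q) at 1 by ring.
    eapply is_lim_seq_ext; [|exact Hl]. intros n. simpl.
    pose proof (pos_INR n).
    rewrite Rabs_pos_eq. unfold a. rewrite S_INR. simpl. field. split; [apply pow_nonzero; lra | lra].
    unfold a. apply Rlt_le. apply Rdiv_lt_0_compat. 
    specialize (Hpos (S n)). unfold a in Hpos. exact Hpos. specialize (Hpos n). exact Hpos. }
  eapply ex_series_ext; [|exact H]. intros n. apply Rabs_pos_eq. specialize (Hpos n). lra.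
Qed.

Lemma ser_sq_geom q : 0 <= q < 1 -> ex_series (fun n => (INR n + 1)^2 * q^n).
Proof.
  intros Hq.
  apply (ex_series_le (K:=R_AbsRing) (V:=R_CompleteNormedModule) _ (fun n => (INR n + 1)^2 * ((1+q)/2)^n)).
  - intros n. change norm with Rabs. rewrite Rabs_pos_eq.
    apply Rmult_le_compat_l. apply pow_le. pose proof (pos_INR n). lra. apply pow_incr. lra.
    apply Rmult_le_pos. apply pow_le. pose proof (pos_INR n). lra. apply pow_le. lra.
  - apply ser_sq_geom_pos. lra.
Qed.

Lemma Cser_bounded a l : Cser a l -> exists M, forall n, Cmod (a n) <= M.
Proof.
  intros H. destruct (Cser_eps a l H 1 Rlt_0_1) as [N HN].
  exists (2 + sum_n (fun k => Cmod (a k)) N). intros n.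
  assert (Hs : forall m, 0 <= sum_n (fun k => Cmod (a k)) m).
  { induction m. rewrite sum_O. apply Cmod_ge_0. rewrite sum_Sn. change (plus ?x ?y) with (x + y). pose proof (Cmod_ge_0 (a (S m))). lra. }
  destruct (Compare_dec.le_lt_dec n N) as [Hle|Hlt].
  - assert (Cmod (a n) <= sum_n (fun k => Cmod (a k)) N).
    { clear -Hle Hs. induction Hle.
      + destruct n. rewrite sum_O. lra. rewrite sum_Sn. change (plus ?x ?y) with (x + y). specialize (Hs n). lra.
      + rewrite sum_Sn. change (plus ?x ?y) with (x + y). pose proof (Cmod_ge_0 (a (S m))). lra. }
    lra.
  - destruct n. lia.
    pose proof (HN n ltac:(lia)) as H1. pose proof (HN (S n) ltac:(lia)) as H2.
    rewrite sum_Sn in H2. change (plus ?x ?y) with (x + y)%C in H2.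
    replace (a (S n)) with ((sum_n a n + a (S n) - l) - (sum_n a n - l))%C by ring.
    eapply Rle_trans. apply Cmod_triangle. rewrite Cmod_opp. specialize (Hs N). lra.
Qed.

Lemma pseries_abs a rho l s : 0 < rho -> is_pseries (K:=C_AbsRing) (V:=C_NormedModule) a (RtoC rho) l -> 0 <= s < rho ->
  ex_series (fun n => (INR n + 1)^2 * (Cmod (a n) * s^n)).
Proof.
  intros Hr H Hs. apply pseries_Cser in H. apply Cser_bounded in H. destruct H as [M HM].
  apply (ex_series_le (K:=R_AbsRing) (V:=R_CompleteNormedModule) _ (fun n => M * ((INR n + 1)^2 * (s/rho)^n))).
  - intros n. change norm with Rabs. specialize (HM n). rewrite Cmod_mult, Cmod_pow, Cmod_R, Rabs_pos_eq in HM by lra.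
    rewrite Rabs_pos_eq.
    2: { apply Rmult_le_pos. apply pow_le. pose proof (pos_INR n). lra. apply Rmult_le_pos. apply Cmod_ge_0. apply pow_le; lra. }
    replace (M * ((INR n + 1) ^ 2 * (s / rho) ^ n)) with ((INR n + 1) ^ 2 * (M * (s/rho)^n)) by ring.
    apply Rmult_le_compat_l. apply pow_le. pose proof (pos_INR n). lra.
    unfold Rdiv. rewrite Rpow_mult_distr. rewrite pow_inv.
    assert (0 < rho ^ n) by (apply pow_lt; lra).
    apply (Rmult_le_reg_r (rho ^ n)). auto.
    replace (M * (s ^ n * / rho ^ n) * rho ^ n) with (M * s^n) by (field; lra).
    replace (Cmod (a n) * s ^ n * rho ^ n) with (rho ^ n * Cmod (a n) * s ^ n) by ring.
    apply Rmult_le_compat_r. apply pow_le; lra. exact HM.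
  - apply (ex_series_scal_l (K:=R_AbsRing) (V:=R_NormedModule) M). apply ser_sq_geom. split.
    apply Rmult_le_pos. lra. apply Rlt_le, Rinv_0_lt_compat. lra.
    apply (Rmult_lt_reg_r rho). lra. field_simplify; lra.
Qed.
Definition CD (F : C -> C) z D := is_derive (K:=C_AbsRing) (V:=C_NormedModule) F z D.

Lemma CD_of_eps F z D :
  (forall eps, 0 < eps -> exists del, 0 < del /\ forall h, Cmod h < del -> Cmod (F (z+h) - F z - h*D)%C <= eps * Cmod h) ->
  CD F z D.
Proof.
  intros H. split.
  - apply is_linear_scal_l.
  - intros x Hx. apply (is_filter_lim_locally_unique (K:=C_AbsRing) (V:=AbsRing_NormedModule C_AbsRing)) in Hx. subst x.
    intros [eps Heps]. destruct (H eps Heps) as [del [Hdel Hd]].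
    assert (Hp : 0 < del / norm_factor (K:=C_AbsRing) (V:=AbsRing_NormedModule C_AbsRing)).
    { apply Rdiv_lt_0_compat; auto. apply norm_factor_gt_0. }
    exists (mkposreal _ Hp). intros y Hy. change C in y.
    pose proof (norm_compat2 (K:=C_AbsRing) (V:=AbsRing_NormedModule C_AbsRing) z y _ Hy) as Hn.
    simpl in Hn. replace (norm_factor * (del / norm_factor)) with del in Hn by (field; apply Rgt_not_eq, norm_factor_gt_0).
    specialize (Hd (y - z)%C).
    replace (z + (y - z))%C with y in Hd by ring.
    change (Cmod (F y - F z - (y - z) * D)%C <= eps * Cmod (y - z)%C). apply Hd. exact Hn.
Qed.

Lemma CD_eps F z D : CD F z D ->
  forall eps, 0 < eps -> exists del, 0 < del /\ forall h, Cmod h < del -> Cmod (F (z+h) - F z - h*D)%C <= eps * Cmod h.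
Proof.
  intros [_ H] eps Heps.
  specialize (H z (fun P HP => HP)). destruct (H (mkposreal eps Heps)) as [del Hdel].
  exists del. split. apply cond_pos. intros h Hh.
  specialize (Hdel (z + h)%C).
  assert (Hb : ball (M:=AbsRing_UniformSpace C_AbsRing) z del (z + h)%C).
  { apply (norm_compat1 (K:=C_AbsRing) (V:=AbsRing_NormedModule C_AbsRing)).
    change (Cmod (z + h - z)%C < del). replace (z + h - z)%C with h by ring. exact Hh. }
  specialize (Hdel Hb). simpl in Hdel.
  change (Cmod (F (z + h) - F z - (z + h - z) * D)%C <= eps * Cmod (z + h - z)%C) in Hdel.
  replace (z + h - z)%C with h in Hdel by ring. exact Hdel.
Qed.

Lemma CD_unique F z D1 D2 : CD F z D1 -> CD F z D2 -> D1 = D2.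
Proof.
  intros H1 H2.
  destruct (Ceq_dec D1 D2) as [E|NE]; auto. exfalso.
  assert (Hp : 0 < Cmod (D1 - D2)) by (apply Cmod_gt_0; intros E; apply NE; replace D1 with (D1 - D2 + D2)%C by ring; rewrite E; ring).
  set (e := Cmod (D1 - D2) / 4).
  destruct (CD_eps F z D1 H1 e) as [d1 [Hd1 P1]]. unfold e; lra.
  destruct (CD_eps F z D2 H2 e) as [d2 [Hd2 P2]]. unfold e; lra.
  set (t := Rmin d1 d2 / 2).
  assert (Ht : 0 < t) by (unfold t; apply Rmin_case; lra).
  assert (Hh : Cmod (RtoC t) = t) by (rewrite Cmod_R; apply Rabs_pos_eq; lra).
  specialize (P1 (RtoC t)). specialize (P2 (RtoC t)).
  rewrite Hh in P1, P2.
  assert (t < d1) by (unfold t; pose proof (Rmin_l d1 d2); lra).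
  assert (t < d2) by (unfold t; pose proof (Rmin_r d1 d2); lra).
  specialize (P1 ltac:(lra)). specialize (P2 ltac:(lra)).
  assert (E : (RtoC t * (D1 - D2))%C = ((F (z + t) - F z - t * D2) - (F (z + t) - F z - t * D1))%C) by ring.
  assert (HH : Cmod (RtoC t * (D1 - D2))%C <= e * t + e * t).
  { rewrite E. eapply Rle_trans. apply Cmod_triangle. rewrite Cmod_opp. lra. }
  rewrite Cmod_mult, Hh in HH. unfold e in HH. nra.
Qed.
Lemma Cpow_pred_S (z : C) m : (z ^ S m = z * z ^ pred (S m))%C.
Proof. reflexivity. Qed.

Lemma pow_diff_bound (z h : C) s n : Cmod z <= s -> Cmod (z + h)%C <= s -> 0 < s ->
  s^2 * Cmod ((z+h)^n - z^n - RtoC (INR n) * h * z^(pred n))%C <= (INR n)^2 * s^n * (Cmod h)^2.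
Proof.
  intros Hz Hzh Hs.
  induction n as [|n IH].
  - simpl. replace (1 - 1 - RtoC 0 * h * 1)%C with (RtoC 0) by ring. rewrite Cmod_0. lra.
  - destruct n as [|m].
    + simpl. replace ((z + h) * 1 - z * 1 - RtoC 1 * h * 1)%C with (RtoC 0) by ring. rewrite Cmod_0.
      replace (s*(s*1)*0) with 0 by ring. apply Rmult_le_pos. apply Rmult_le_pos. simpl; lra. simpl; lra.
      pose proof (Cmod_ge_0 h). nra.
    + set (Dm := ((z+h)^(S m) - z^(S m) - RtoC (INR (S m)) * h * z^(pred (S m)))%C) in *.
      assert (E : ((z + h) ^ S (S m) - z ^ S (S m) - RtoC (INR (S (S m))) * h * z ^ pred (S (S m)))%C
                 = ((z + h) * Dm + RtoC (INR (S m)) * h * h * z ^ m)%C).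
      { unfold Dm. simpl pred. rewrite !S_INR. change ((z+h)^(S (S m)))%C with ((z+h) * ((z+h) * (z+h)^m))%C.
        change ((z+h)^(S m))%C with ((z+h) * (z+h)^m)%C.
        change (z^(S (S m)))%C with (z * (z * z^m))%C. change (z^(S m))%C with (z * z^m)%C.
        rewrite !RtoC_plus. ring. }
      rewrite E.
      assert (H1 : Cmod ((z + h) * Dm + RtoC (INR (S m)) * h * h * z ^ m)%C <= s * Cmod Dm + INR (S m) * (Cmod h)^2 * s^m).
      { eapply Rle_trans. apply Cmod_triangle. rewrite !Cmod_mult, Cmod_R, Cmod_pow.
        rewrite Rabs_pos_eq by apply pos_INR.
        apply Rplus_le_compat. apply Rmult_le_compat_r. apply Cmod_ge_0. exact Hzh.
        replace (INR (S m) * Cmod h * Cmod h * Cmod z ^ m) with (INR (S m) * (Cmod h)^2 * Cmod z ^ m) by ring.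
        apply Rmult_le_compat_l. apply Rmult_le_pos. apply pos_INR. apply pow2_ge_0.
        apply pow_incr. split. apply Cmod_ge_0. exact Hz. }
      assert (Hm : 0 <= INR (S m)) by apply pos_INR.
      assert (HI : s^2 * Cmod Dm <= INR (S m) ^ 2 * s ^ S m * Cmod h ^ 2) by exact IH.
      apply Rle_trans with (s^2 * (s * Cmod Dm + INR (S m) * (Cmod h)^2 * s^m)).
      apply Rmult_le_compat_l. apply pow2_ge_0. exact H1.
      rewrite (S_INR (S m)).
      replace (s ^ 2 * (s * Cmod Dm + INR (S m) * Cmod h ^ 2 * s ^ m)) with
        (s * (s^2 * Cmod Dm) + INR (S m) * Cmod h ^ 2 * s ^ (S (S m))) by (simpl; ring).
      apply Rle_trans with (s * (INR (S m) ^ 2 * s ^ S m * Cmod h ^ 2) + INR (S m) * Cmod h ^ 2 * s ^ (S (S m))).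
      apply Rplus_le_compat_r. apply Rmult_le_compat_l. lra. exact HI.
      assert (0 <= s ^ (S (S m)) * Cmod h ^2) by (apply Rmult_le_pos; [apply pow_le; lra | apply pow2_ge_0]).
      replace (s * (INR (S m) ^ 2 * s ^ S m * Cmod h ^ 2) + INR (S m) * Cmod h ^ 2 * s ^ S (S m))
        with ((INR (S m) ^ 2 + INR (S m)) * (s ^ (S (S m)) * Cmod h ^2)) by (simpl; ring).
      replace ((INR (S m) + 1) ^ 2 * s ^ S (S m) * Cmod h ^ 2) with ((INR (S m) + 1) ^ 2 * (s ^ (S (S m)) * Cmod h ^2)) by ring.
      apply Rmult_le_compat_r. auto. nra.
Qed.
Lemma pseries_deriv (a : nat -> C) (Rr : R) (F : C -> C) (z : C) :
  0 < Rr -> (forall w, Cmod w < Rr -> is_pseries (K:=C_AbsRing) (V:=C_NormedModule) a w (F w)) -> Cmod z < Rr ->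
  exists D, Cser (fun n => RtoC (INR n) * a n * z^(pred n))%C D /\ CD F z D.
Proof.
  intros HR HF Hz.
  pose proof (Cmod_ge_0 z) as Hz0.
  set (rho := (Cmod z + Rr)/2). set (s := (Cmod z + rho)/2).
  assert (Hrho : 0 < rho) by (unfold rho; lra).
  assert (Hs : Cmod z < s < rho) by (unfold s, rho; lra).
  assert (Hrho2 : rho < Rr) by (unfold rho; lra).
  assert (Hpr : is_pseries (K:=C_AbsRing) (V:=C_NormedModule) a (RtoC rho) (F (RtoC rho))).
  { apply HF. rewrite Cmod_R, Rabs_pos_eq; unfold rho; lra. }
  set (G := fun n => (INR n + 1)^2 * (Cmod (a n) * s^n)).
  assert (HG : ex_series G) by (apply (pseries_abs a rho (F (RtoC rho)) s); auto; lra).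
  assert (HG0 : forall n, 0 <= G n).
  { intros n. unfold G. apply Rmult_le_pos. apply pow2_ge_0. apply Rmult_le_pos. apply Cmod_ge_0. apply pow_le; lra. }
  assert (Hd : forall n, Cmod (RtoC (INR n) * a n * z^(pred n))%C <= / s * G n).
  { intros n. rewrite !Cmod_mult, Cmod_R, Cmod_pow, Rabs_pos_eq by apply pos_INR.
    apply (Rmult_le_reg_l s). lra. replace (s * (/ s * G n)) with (G n) by (field; lra). unfold G.
    destruct n as [|m].
    - simpl. pose proof (Cmod_ge_0 (a 0%nat)). nra.
    - simpl pred. 
      assert (Hp : Cmod z ^ m <= s ^ m) by (apply pow_incr; lra).
      assert (0 <= INR (S m)) by apply pos_INR.
      assert (0 <= Cmod (a (S m))) by apply Cmod_ge_0.
      assert (0 <= Cmod z ^ m) by (apply pow_le; lra).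
      replace (s * (INR (S m) * Cmod (a (S m)) * Cmod z ^ m)) with (INR (S m) * Cmod (a (S m)) * (s * Cmod z ^ m)) by ring.
      replace ((INR (S m) + 1) ^ 2 * (Cmod (a (S m)) * s ^ S m)) with ((INR (S m) + 1) ^ 2 * Cmod (a (S m)) * (s * s ^ m)) by (simpl; ring).
      apply Rmult_le_compat. apply Rmult_le_pos; lra. apply Rmult_le_pos. lra. auto.
      apply Rmult_le_compat_r. auto. nra. apply Rmult_le_compat_l; lra. }
  destruct (Cser_exists_abs (fun n => RtoC (INR n) * a n * z^(pred n))%C) as [D HD].
  { apply (ex_series_le (K:=R_AbsRing) (V:=R_CompleteNormedModule) _ (fun n => / s * G n)).
    intros n. change norm with Rabs. rewrite Rabs_pos_eq by apply Cmod_ge_0. apply Hd.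
    apply (ex_series_scal_l (K:=R_AbsRing) (V:=R_NormedModule)). exact HG. }
  exists D. split; auto.
  destruct HG as [SG HSG].
  set (K := SG / s^2).
  assert (HK : 0 <= K).
  { unfold K. apply Rmult_le_pos. 2: apply Rlt_le, Rinv_0_lt_compat; apply pow_lt; lra.
    apply Rle_trans with (sum_n G 0). rewrite sum_O. auto. apply sum_n_le_series; auto. }
  apply CD_of_eps. intros eps Heps.
  exists (Rmin (s - Cmod z) (eps / (K + 1))). split.
  { apply Rmin_case. lra. apply Rdiv_lt_0_compat; lra. }
  intros h Hh.
  assert (Hh1 : Cmod h < s - Cmod z) by (eapply Rlt_le_trans; [exact Hh| apply Rmin_l]).
  assert (Hh2 : Cmod h < eps / (K+1)) by (eapply Rlt_le_trans; [exact Hh| apply Rmin_r]).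
  assert (Hzh : Cmod (z + h)%C <= s) by (eapply Rle_trans; [apply Cmod_triangle| lra]).
  assert (S1 : Cser (fun n => (z + h)^n * a n)%C (F (z + h)%C)).
  { apply pseries_Cser. apply HF. lra. }
  assert (S2 : Cser (fun n => z^n * a n)%C (F z)).
  { apply pseries_Cser. apply HF. lra. }
  pose proof (Cser_minus _ _ _ _ (Cser_minus _ _ _ _ S1 S2) (Cser_scal h _ _ HD)) as S3.
  assert (Hb : forall n, Cmod (((z + h) ^ n * a n - z ^ n * a n) - h * (RtoC (INR n) * a n * z ^ pred n))%C <= (/ s^2 * Cmod h ^ 2) * G n).
  { intros n. replace (((z + h) ^ n * a n - z ^ n * a n) - h * (RtoC (INR n) * a n * z ^ pred n))%C with
      (a n * ((z+h)^n - z^n - RtoC (INR n) * h * z^(pred n)))%C by ring.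
    rewrite Cmod_mult. pose proof (pow_diff_bound z h s n ltac:(lra) Hzh ltac:(lra)) as Hpd.
    assert (Hs2 : 0 < s^2) by (apply pow_lt; lra).
    apply (Rmult_le_reg_l (s^2)). auto.
    replace (s ^ 2 * (/ s ^ 2 * Cmod h ^ 2 * G n)) with (Cmod h ^ 2 * G n) by (field; lra).
    replace (s ^ 2 * (Cmod (a n) * Cmod ((z + h) ^ n - z ^ n - RtoC (INR n) * h * z ^ pred n)%C))
      with (Cmod (a n) * (s^2 * Cmod ((z + h) ^ n - z ^ n - RtoC (INR n) * h * z ^ pred n)%C)) by ring.
    apply Rle_trans with (Cmod (a n) * (INR n ^ 2 * s ^ n * Cmod h ^ 2)).
    apply Rmult_le_compat_l. apply Cmod_ge_0. exact Hpd.
    unfold G. pose proof (pos_INR n). pose proof (Cmod_ge_0 (a n)). 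
    assert (0 <= s^n * Cmod h ^2) by (apply Rmult_le_pos; [apply pow_le; lra| apply pow2_ge_0]).
    replace (Cmod (a n) * (INR n ^ 2 * s ^ n * Cmod h ^ 2)) with (INR n ^2 * (Cmod (a n) * (s ^ n * Cmod h ^ 2))) by ring.
    replace (Cmod h ^ 2 * ((INR n + 1) ^ 2 * (Cmod (a n) * s ^ n))) with ((INR n + 1) ^2 * (Cmod (a n) * (s ^ n * Cmod h ^ 2))) by ring.
    apply Rmult_le_compat_r. apply Rmult_le_pos; auto. nra. }
  pose proof (Cser_norm_le _ _ _ _ Hb (is_series_scal_l (K:=R_AbsRing) (V:=R_NormedModule) _ _ _ HSG) S3) as Hfin.
  change (scal (/ s ^ 2 * Cmod h ^ 2) SG) with (/ s ^ 2 * Cmod h ^ 2 * SG) in Hfin.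
  replace (F (z + h)%C - F z - h * D)%C with (F (z + h) - F z - h * D)%C by ring.
  eapply Rle_trans. exact Hfin.
  replace (/ s ^ 2 * Cmod h ^ 2 * SG) with (K * Cmod h * Cmod h) by (unfold K; simpl; field; lra).
  apply Rmult_le_compat_r. apply Cmod_ge_0.
  apply Rle_trans with (K * (eps / (K+1))). apply Rmult_le_compat_l; lra.
  apply (Rmult_le_reg_r (K+1)). lra. replace (K * (eps / (K + 1)) * (K + 1)) with (K * eps) by (field; lra). nra.
Qed.
Lemma series_fin {K : AbsRing} {V : NormedModule K} (b : nat -> V) N :
  (forall n, (N < n)%nat -> b n = zero) -> is_series b (sum_n b N).
Proof.
  intros Hb P HP. exists N. intros n Hn. apply locally_singleton in HP.
  replace (sum_n b n) with (sum_n b N); auto.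
  induction Hn. reflexivity. rewrite sum_Sn, Hb by lia. rewrite plus_zero_r. exact IHHn.
Qed.

Lemma Cser_incr_1 a l : Cser a l -> a 0%nat = RtoC 0 -> Cser (fun k => a (S k)) l.
Proof.
  intros H H0. unfold Cser in *. apply is_series_incr_1.
  match goal with |- is_series _ ?x => replace x with l; [exact H|] end. rewrite H0. symmetry. etransitivity; [|apply (plus_zero_r l)]. reflexivity.
Qed.

Definition ecoef (k : nat) : C := RtoC (/ INR (Factorial.fact k)).
Definition PS (a : nat -> C) (z : C) : C := epsilon (inhabits (RtoC 0)) (fun l => is_pseries (K:=C_AbsRing) (V:=C_NormedModule) a z l).
Lemma PS_spec a z : (exists l, is_pseries (K:=C_AbsRing) (V:=C_NormedModule) a z l) -> is_pseries (K:=C_AbsRing) (V:=C_NormedModule) a z (PS a z).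
Proof. intros H. unfold PS. apply epsilon_spec. exact H. Qed.
Definition Cexp (u : C) : C := PS ecoef u.

Lemma ecoef_conv u : exists l, is_pseries (K:=C_AbsRing) (V:=C_NormedModule) ecoef u l.
Proof.
  destruct (Cser_exists_abs (fun n => u^n * ecoef n)%C) as [l Hl].
  - pose proof (is_exp_Reals (Cmod u)) as H. apply is_pseries_R in H.
    eexists. eapply is_series_ext; [|exact H]. intros n. simpl.
    unfold ecoef. rewrite Cmod_mult, Cmod_pow, Cmod_R, Rabs_pos_eq. ring.
    apply Rlt_le, Rinv_0_lt_compat. apply lt_0_INR. apply Factorial.lt_O_fact.
  - exists l. apply pseries_Cser. exact Hl.
Qed.

Lemma Cexp_spec u : Cser (fun n => u^n * ecoef n)%C (Cexp u).
Proof. apply pseries_Cser. apply PS_spec. apply ecoef_conv. Qed.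

Lemma Cexp_is u E : is_cexp u E -> E = Cexp u.
Proof. intros H. apply pseries_Cser in H. exact (Cser_unique _ _ _ H (Cexp_spec u)). Qed.

Lemma Cexp_deriv u : CD Cexp u (Cexp u).
Proof.
  destruct (pseries_deriv ecoef (Cmod u + 1) Cexp u) as [D [HD HC]].
  - pose proof (Cmod_ge_0 u). lra.
  - intros w _. apply PS_spec. apply ecoef_conv.
  - lra.
  - replace (Cexp u) with D; auto.
    apply Cser_incr_1 in HD. 2: { simpl. ring. }
    apply (Cser_unique (fun k => (INR (S k) * ecoef (S k) * u ^ pred (S k))%C)); auto.
    eapply Cser_ext; [|apply Cexp_spec]. intros n. simpl pred. unfold ecoef.
    rewrite fact_simpl, mult_INR, Rinv_mult, RtoC_mult.
    assert (INR (S n) <> 0) by (apply not_0_INR; lia).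
    rewrite (RtoC_inv (INR (S n))) by auto.
    field. intros E. apply H. injection E. auto.
Qed.

Lemma Cexp_0 : Cexp (RtoC 0) = RtoC 1.
Proof.
  symmetry. apply (Cser_unique (fun n => RtoC 0 ^ n * ecoef n)%C); [|apply Cexp_spec].
  replace (RtoC 1) with (sum_n (fun n => RtoC 0 ^ n * ecoef n)%C 0).
  apply (series_fin (K:=C_AbsRing) (V:=C_NormedModule)). intros n Hn. destruct n. lia. simpl. transitivity (RtoC 0). ring. reflexivity.
  rewrite sum_O. simpl. unfold ecoef. simpl. rewrite Rinv_1. ring.
Qed.

Lemma Cexp_near1 u : Cmod u < 1 -> Cmod (Cexp u - 1)%C <= Cmod u / (1 - Cmod u).
Proof.
  intros Hu. pose proof (Cmod_ge_0 u) as Hu0.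
  set (dl := fun n : nat => match n with O => RtoC 1 | S _ => RtoC 0 end).
  assert (H1 : Cser dl (RtoC 1)).
  { replace (RtoC 1) with (sum_n dl 0) by (rewrite sum_O; reflexivity).
    apply (series_fin (K:=C_AbsRing) (V:=C_NormedModule)). intros n Hn. destruct n. lia. reflexivity. }
  pose proof (Cser_minus _ _ _ _ (Cexp_spec u) H1) as H2.
  set (bl := fun n : nat => match n with O => 0 | S _ => Cmod u ^ n end).
  assert (H3 : is_series bl (Cmod u / (1 - Cmod u))).
  { assert (Hg := is_series_geom (Cmod u) ltac:(rewrite Rabs_pos_eq; lra)).
    set (dr := fun n : nat => match n with O => 1 | S _ => 0 end).
    assert (Hd : is_series dr (sum_n dr 0)).
    { apply (series_fin (K:=R_AbsRing) (V:=R_NormedModule)). intros n Hn. destruct n. lia. reflexivity. }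
    rewrite sum_O in Hd. simpl in Hd.
    pose proof (is_series_minus _ _ _ _ Hg Hd) as Hm.
    replace (Cmod u / (1 - Cmod u)) with (plus (/ (1 - Cmod u)) (opp 1)).
    eapply is_series_ext; [|exact Hm]. intros n. destruct n; simpl.
    change (1 + - 1 = 0). ring. change (Cmod u * Cmod u ^ n + - 0 = Cmod u * Cmod u ^ n). ring.
    change (/ (1 - Cmod u) + - 1 = Cmod u / (1 - Cmod u)). field. lra. }
  eapply Cser_norm_le; [|exact H3|exact H2]. cbv beta.
  intros n. destruct n.
  - simpl. unfold ecoef. simpl. rewrite Rinv_1. replace (1 * RtoC 1 - RtoC 1)%C with (RtoC 0) by ring. rewrite Cmod_0. lra.
  - simpl bl. unfold dl. replace (u ^ S n * ecoef (S n) - RtoC 0)%C with (u ^ S n * ecoef (S n))%C by ring.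
    rewrite Cmod_mult, Cmod_pow. unfold ecoef. rewrite Cmod_R, Rabs_pos_eq.
    2: apply Rlt_le, Rinv_0_lt_compat, lt_0_INR, Factorial.lt_O_fact.
    assert (0 <= Cmod u ^ S n) by (apply pow_le; lra).
    assert (/ INR (Factorial.fact (S n)) <= 1) by (rewrite <- Rinv_1; apply Rinv_le_contravar; [lra| apply (le_INR 1); apply Factorial.lt_O_fact]).
    change (Cmod u * Cmod u ^ n) with (Cmod u ^ S n). nra.
Qed.
Fixpoint Csum (f : nat -> C) (n : nat) : C :=
  match n with O => f O | S m => (Csum f m + f (S m))%C end.

Lemma Csum_sum_n f n : Csum f n = sum_n f n.
Proof. induction n. rewrite sum_O. reflexivity. rewrite sum_Sn. simpl. rewrite IHn. reflexivity. Qed.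

Lemma Csum_ext f g n : (forall k, (k <= n)%nat -> f k = g k) -> Csum f n = Csum g n.
Proof. intros H. induction n; simpl. apply H; lia. rewrite IHn. rewrite H by lia. reflexivity. intros k Hk; apply H; lia. Qed.

Lemma Csum_plus f g n : Csum (fun k => f k + g k)%C n = (Csum f n + Csum g n)%C.
Proof. induction n; simpl. reflexivity. rewrite IHn. ring. Qed.

Lemma Csum_scal_l c f n : Csum (fun k => c * f k)%C n = (c * Csum f n)%C.
Proof. induction n; simpl. reflexivity. rewrite IHn. ring. Qed.

Lemma Csum_scal_r c f n : Csum (fun k => f k * c)%C n = (Csum f n * c)%C.
Proof. induction n; simpl. reflexivity. rewrite IHn. ring. Qed.

Lemma Csum_conj f n : Cconj (Csum f n) = Csum (fun k => Cconj (f k)) n.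
Proof. induction n; simpl. reflexivity. rewrite Cplus_conj, IHn. reflexivity. Qed.

Lemma Csum_swap (F : nat -> nat -> C) N M :
  Csum (fun i => Csum (fun j => F i j) M) N = Csum (fun j => Csum (fun i => F i j) N) M.
Proof.
  induction N; simpl. reflexivity.
  rewrite IHN. rewrite <- Csum_plus. reflexivity.
Qed.

Lemma Csum_RtoC (g : nat -> R) n : RtoC (sum_f_R0 g n) = Csum (fun k => RtoC (g k)) n.
Proof. induction n; simpl. reflexivity. rewrite RtoC_plus, IHn. reflexivity. Qed.

Lemma Csum_zero n : Csum (fun _ => RtoC 0) n = RtoC 0.
Proof. induction n; simpl. reflexivity. rewrite IHn. ring. Qed.

Lemma Csum_delta (c : C) i n : (i <= n)%nat ->
  Csum (fun j => if Nat.eq_dec i j then c else RtoC 0) n = c.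
Proof.
  intros H. induction n; simpl.
  - assert (i = 0%nat) by lia. subst. destruct (Nat.eq_dec 0 0); [reflexivity|lia].
  - destruct (Nat.eq_dec i (S n)) as [E|E].
    + subst. rewrite (Csum_ext _ (fun _ => RtoC 0)). 
      2: { intros k Hk. destruct (Nat.eq_dec (S n) k); [lia|reflexivity]. }
      rewrite Csum_zero. ring.
    + rewrite IHn by lia. ring.
Qed.


Lemma geom_Csum (q : C) M : ((1 - q) * Csum (fun k => q ^ k) M = 1 - q ^ (S M))%C.
Proof. induction M; simpl. ring. rewrite Cmult_plus_distr_l, IHM. simpl. ring. Qed.

Section Roots.
Variable M : nat.
Definition th := 2 * PI / INR (S M).
Definition om : C := (cos th, sin th).

Lemma om_pow k : (om ^ k)%C = (cos (INR k * th), sin (INR k * th)).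
Proof.
  induction k.
  - simpl. rewrite Rmult_0_l, cos_0, sin_0. reflexivity.
  - rewrite Cpow_S, IHk. unfold om, Cmult. simpl fst. simpl snd.
    rewrite S_INR. replace ((INR k + 1) * th) with (th + INR k * th) by ring.
    rewrite cos_plus, sin_plus. f_equal; ring.
Qed.

Lemma om_mod k : Cmod (om ^ k)%C = 1.
Proof.
  rewrite om_pow. unfold Cmod. simpl fst; simpl snd.
  replace (cos (INR k * th) ^ 2 + sin (INR k * th) ^ 2) with 1. apply sqrt_1.
  pose proof (sin2_cos2 (INR k * th)). unfold Rsqr in H. simpl. lra.
Qed.

Lemma unit_conj (x : C) : Cmod x = 1 -> (x * Cconj x)%C = RtoC 1.
Proof. intros H. rewrite <- Cmod2_conj, H. simpl. f_equal. ring. Qed.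

Lemma om_N : (om ^ S M)%C = RtoC 1.
Proof.
  rewrite om_pow. unfold th. replace (INR (S M) * (2 * PI / INR (S M))) with (2 * PI).
  rewrite cos_2PI, sin_2PI. reflexivity.
  field. apply not_0_INR. lia.
Qed.

Lemma om_ne1 j : (0 < j <= M)%nat -> (om ^ j)%C <> RtoC 1.
Proof.
  intros Hj E. rewrite om_pow in E. injection E. intros _ Hc.
  set (x := INR j * th) in *.
  assert (Hx : 0 < x / 2 < PI).
  { unfold x, th. assert (0 < INR j) by (apply lt_0_INR; lia).
    assert (INR j < INR (S M)) by (apply lt_INR; lia).
    assert (0 < INR (S M)) by (apply lt_0_INR; lia).
    pose proof PI_RGT_0.
    split. apply Rmult_lt_0_compat. apply Rmult_lt_0_compat. auto. apply Rdiv_lt_0_compat; lra. lra.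
    replace (INR j * (2 * PI / INR (S M)) / 2) with (PI * (INR j / INR (S M))) by (field; lra).
    rewrite <- (Rmult_1_r PI) at 2. apply Rmult_lt_compat_l. lra.
    apply (Rmult_lt_reg_r (INR (S M))). lra. unfold Rdiv. rewrite Rmult_assoc, Rinv_l; lra. }
  pose proof (sin_gt_0 _ (proj1 Hx) (proj2 Hx)).
  pose proof (cos_2a_sin (x/2)). replace (2 * (x/2)) with x in H0 by field. nra.
Qed.

Lemma Cconj_pow_unit (x : C) k : Cmod x = 1 -> (Cconj x ^ k * x ^ k)%C = RtoC 1.
Proof.
  intros H. rewrite <- Cpow_mult_l. rewrite Cmult_comm, unit_conj by auto. apply Cpow_1_l.
Qed.

Lemma Csum_one M' : Csum (fun _ => RtoC 1) M' = RtoC (INR (S M')).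
Proof. induction M'. simpl. reflexivity. simpl Csum. rewrite IHM'. rewrite (S_INR (S M')), RtoC_plus. reflexivity. Qed.

Lemma om_geom (n m : nat) : (n <= M)%nat -> (m <= M)%nat ->
  Csum (fun k => (om ^ k) ^ n * Cconj ((om ^ k) ^ m))%C M = if Nat.eq_dec n m then RtoC (INR (S M)) else RtoC 0.
Proof.
  intros Hn Hm.
  set (q := (om ^ n * Cconj (om ^ m))%C).
  rewrite (Csum_ext _ (fun k => q ^ k)%C).
  2: { intros k _. unfold q. rewrite Cpow_mult_l. rewrite !Cpow_conj. rewrite <- !Cpow_mult_r.
       f_equal; f_equal; lia. }
  assert (Hom : forall k, Cmod (om ^ k)%C = 1) by apply om_mod.
  destruct (Nat.eq_dec n m) as [E|E].
  - subst. assert (Hq : q = RtoC 1) by (unfold q; apply unit_conj, om_mod).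
    rewrite Hq. rewrite (Csum_ext _ (fun _ => RtoC 1)). apply Csum_one. intros k _. apply Cpow_1_l.
  - assert (Cc1 : Cconj (RtoC 1) = RtoC 1) by (unfold Cconj, RtoC; simpl; rewrite Ropp_0; reflexivity).
    assert (HqN : (q ^ S M)%C = RtoC 1).
    { unfold q. rewrite Cpow_mult_l, Cpow_conj, <- !Cpow_mult_r, (Nat.mul_comm n), (Nat.mul_comm m), !Cpow_mult_r.
      rewrite <- Cpow_conj, om_N, Cc1, !Cpow_1_l. ring. }
    assert (Hq1 : q <> RtoC 1).
    { intros Hq. destruct (Compare_dec.le_lt_dec n m) as [Hle|Hlt].
      - apply (om_ne1 (m - n)). lia.
        assert (H : (om ^ (m - n))%C = Cconj q).
        { unfold q. rewrite Cmult_conj, Cconj_conj. replace m with ((m-n)+n)%nat at 2 by lia. rewrite Cpow_add_r.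
          transitivity (om^(m-n) * (om^n * Cconj (om^n)))%C. rewrite unit_conj by apply om_mod. ring. ring. }
        rewrite H, Hq, Cc1. reflexivity.
      - apply (om_ne1 (n - m)). lia.
        assert (H : (om ^ (n - m))%C = q).
        { unfold q. replace n with ((n-m)+m)%nat at 2 by lia. rewrite Cpow_add_r.
          transitivity (om^(n-m) * (om^m * Cconj (om^m)))%C. rewrite unit_conj by apply om_mod. ring. ring. }
        rewrite H, Hq. reflexivity. }
    pose proof (geom_Csum q M) as G. rewrite HqN in G.
    assert (Hnz : (1 - q)%C <> RtoC 0).
    { intros Z. apply Hq1. replace q with (1 - (1 - q))%C by ring. rewrite Z. ring. }
    replace (Csum (fun k => q ^ k)%C M) with (((1 - q) * Csum (fun k => q ^ k)%C M) / (1 - q))%C by (field; auto).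
    rewrite G. replace (1 - 1)%C with (RtoC 0) by ring. field. auto.
Qed.
End Roots.
Lemma RtoC_inj_eq (x y : R) : RtoC x = RtoC y -> x = y.
Proof. intros H. injection H. auto. Qed.

Lemma dft_parseval M (b : nat -> C) :
  sum_f_R0 (fun k => Cmod (Csum (fun n => b n * (om M ^ k) ^ n)%C M) ^ 2) M = INR (S M) * sum_f_R0 (fun n => Cmod (b n) ^ 2) M.
Proof.
  apply RtoC_inj_eq. rewrite RtoC_mult, !Csum_RtoC.
  rewrite (Csum_ext _ (fun k => Csum (fun n => Csum (fun m => b n * Cconj (b m) * ((om M ^ k) ^ n * Cconj ((om M ^ k) ^ m))) M) M)%C).
  2: { intros k _. rewrite Cmod2_conj, Csum_conj.
       rewrite <- Csum_scal_r. apply Csum_ext. intros n _.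
       rewrite <- Csum_scal_l. apply Csum_ext. intros m _. rewrite Cmult_conj. ring. }
  rewrite Csum_swap.
  rewrite (Csum_ext _ (fun n => Csum (fun m => b n * Cconj (b m) * (if Nat.eq_dec n m then RtoC (INR (S M)) else RtoC 0)) M)%C).
  2: { intros n Hn. rewrite Csum_swap. apply Csum_ext. intros m Hm.
       rewrite Csum_scal_l. rewrite om_geom; auto. }
  rewrite <- Csum_scal_l. apply Csum_ext. intros n Hn.
  rewrite (Csum_ext _ (fun m => if Nat.eq_dec n m then (b n * Cconj (b n) * RtoC (INR (S M)))%C else RtoC 0)).
  2: { intros m _. destruct (Nat.eq_dec n m). subst. reflexivity. ring. }
  rewrite Csum_delta by auto. rewrite Cmod2_conj. ring.
Qed.
Ltac Req := match goal with |- ?x = ?y => change (@eq R x y) end.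

Lemma Cser_tail (a : nat -> C) (l : C) (A : R) (M : nat) : Cser a l -> is_series (fun n => Cmod (a n)) A ->
  Cmod (l - sum_n a M)%C <= A - sum_n (fun n => Cmod (a n)) M.
Proof.
  intros Ha HA.
  assert (H1 : Cser (fun k => a (S M + k)%nat) (l - sum_n a M)%C).
  { unfold Cser in *. apply (is_series_incr_n (K:=C_AbsRing) (V:=C_NormedModule)). lia.
    match goal with |- is_series _ ?x => replace x with l; [exact Ha|] end.
    simpl pred. change (l = l - sum_n a M + sum_n a M)%C. ring. }
  assert (H2 : is_series (fun k => Cmod (a (S M + k)%nat)) (A - sum_n (fun n => Cmod (a n)) M)).
  { apply (is_series_incr_n (K:=R_AbsRing) (V:=R_NormedModule) (fun n => Cmod (a n))). lia.
    match goal with |- is_series _ ?x => replace x with A; [exact HA|] end.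
    simpl pred. change (A = A - sum_n (fun n => Cmod (a n)) M + sum_n (fun n => Cmod (a n)) M :> R). ring. }
  exact (Cser_norm_le _ _ _ _ (fun n => Rle_refl _) H2 H1).
Qed.

Lemma sum_f_R0_le_sub (g : nat -> R) M : (3 <= M)%nat -> (forall n, 0 <= g n) ->
  g 1%nat + g 2%nat + g 3%nat <= sum_f_R0 g M.
Proof.
  intros HM Hg. induction HM.
  - simpl. pose proof (Hg 0%nat). lra.
  - simpl. pose proof (Hg (S m)). lra.
Qed.

Lemma sum_sq_le (g : nat -> R) B N : (forall k, 0 <= g k <= B) -> sum_f_R0 (fun k => g k ^ 2) N <= INR (S N) * B^2.
Proof.
  intros H. induction N.
  - simpl. specialize (H 0%nat). nra.
  - rewrite tech5. rewrite (S_INR (S N)). specialize (H (S N)). nra.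
Qed.

Lemma coef3_r (c : nat -> C) r :
  (forall z, 0 < Cmod z < 1 -> exists W, Cser (fun n => z^n * c n)%C W /\ Cmod W <= 1) ->
  0 < r < 1 ->
  Cmod (c 1%nat)^2 * r^2 + Cmod (c 2%nat)^2 * r^4 + Cmod (c 3%nat)^2 * r^6 <= 1.
Proof.
  intros Hc Hr.
  set (Sr := Cmod (c 1%nat)^2 * r^2 + Cmod (c 2%nat)^2 * r^4 + Cmod (c 3%nat)^2 * r^6).
  set (rho := (1 + r)/2).
  destruct (Hc (RtoC rho)) as [W0 [HW0 _]].
  { rewrite Cmod_R, Rabs_pos_eq; unfold rho; lra. }
  assert (Hex := pseries_abs c rho W0 r ltac:(unfold rho; lra) ltac:(apply pseries_Cser; exact HW0) ltac:(unfold rho; lra)).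
  set (u := fun n => Cmod (c n) * r^n).
  assert (Hu : ex_series u).
  { refine (ex_series_le (K:=R_AbsRing) (V:=R_CompleteNormedModule) _ _ _ Hex).
    intros n. cbv beta. change norm with Rabs. unfold u. rewrite Rabs_pos_eq.
    2: { apply Rmult_le_pos. apply Cmod_ge_0. apply pow_le; lra. }
    assert (1 <= (INR n + 1)^2) by (pose proof (pos_INR n); nra).
    assert (0 <= Cmod (c n) * r ^ n) by (apply Rmult_le_pos; [apply Cmod_ge_0 | apply pow_le; lra]).
    nra. }
  destruct Hu as [A HA].
  assert (Key : forall M, (3 <= M)%nat -> Sr <= (1 + (A - sum_n u M))^2).
  { intros M HM.
    set (T := A - sum_n u M).
    assert (HT : 0 <= T).
    { unfold T. assert (sum_n u M <= A). apply sum_n_le_series; auto.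
      intros k. unfold u. apply Rmult_le_pos. apply Cmod_ge_0. apply pow_le; lra. lra. }
    assert (Hk : forall k, Cmod (Csum (fun n => (c n * RtoC (r ^ n)) * (om M ^ k) ^ n)%C M) <= 1 + T).
    { intros k. set (z := (RtoC r * om M ^ k)%C).
      assert (Hz : Cmod z = r) by (unfold z; rewrite Cmod_mult, om_mod, Cmod_R, Rabs_pos_eq; lra).
      destruct (Hc z ltac:(lra)) as [W [HW HW1]].
      assert (HA' : is_series (fun n => Cmod (z ^ n * c n)%C) A).
      { eapply is_series_ext; [|exact HA]. intros n. unfold u. Req. rewrite Cmod_mult, Cmod_pow, Hz. ring. }
      pose proof (Cser_tail _ _ _ M HW HA') as Ht. cbv beta in Ht.
      rewrite (Csum_ext _ (fun n => z ^ n * c n)%C).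
      2: { intros n _. unfold z. rewrite Cpow_mult_l, <- RtoC_pow. ring. }
      rewrite Csum_sum_n.
      replace (sum_n (fun n : nat => Cmod (z ^ n * c n)%C) M) with (sum_n u M) in Ht.
      2: { apply sum_n_ext. intros n. unfold u. Req. rewrite Cmod_mult, Cmod_pow, Hz. ring. }
      fold T in Ht.
      replace (sum_n (fun n => z ^ n * c n)%C M) with (W - (W - sum_n (fun n => z ^ n * c n)%C M))%C by ring.
      eapply Rle_trans. apply Cmod_triangle. rewrite Cmod_opp. apply Rplus_le_compat; [exact HW1|exact Ht]. }
    pose proof (dft_parseval M (fun n => c n * RtoC (r ^ n))%C) as P.
    assert (P1 : sum_f_R0 (fun k => Cmod (Csum (fun n => (c n * RtoC (r ^ n)) * (om M ^ k) ^ n)%C M) ^ 2) M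
                 <= INR (S M) * (1 + T)^2).
    { apply sum_sq_le. intros k. split. apply Cmod_ge_0. apply Hk. }
    assert (P2 : INR (S M) * Sr <= INR (S M) * sum_f_R0 (fun n => Cmod (c n * RtoC (r ^ n))%C ^ 2) M).
    { apply Rmult_le_compat_l. apply pos_INR.
      eapply Rle_trans. 2: apply sum_f_R0_le_sub; auto.
      unfold Sr. rewrite !Cmod_mult, !Cmod_R, !Rabs_pos_eq by (apply pow_le; lra). simpl. lra.
      intros n. apply pow2_ge_0. }
    assert (0 < INR (S M)) by (apply lt_0_INR; lia).
    apply (Rmult_le_reg_l (INR (S M))); auto. lra. }
  apply Rnot_lt_le. intros Hlt.
  assert (HA2 : is_lim_seq (sum_n u) A) by exact HA.
  apply is_lim_seq_spec in HA2.
  set (e := Rmin 1 ((Sr - 1) / 4)).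
  assert (He : 0 < e) by (unfold e; apply Rmin_case; lra).
  destruct (HA2 (mkposreal e He)) as [N HN].
  specialize (HN (N + 3)%nat ltac:(lia)). simpl in HN.
  specialize (Key (N + 3)%nat ltac:(lia)).
  rewrite Rabs_minus_sym in HN. apply Rabs_lt_between in HN.
  assert (e <= 1) by (unfold e; apply Rmin_l). assert (e <= (Sr - 1)/4) by (unfold e; apply Rmin_r).
  set (T := A - sum_n u (N+3)) in *.
  assert (0 <= T).
  { unfold T. assert (sum_n u (N+3) <= A). apply sum_n_le_series; auto.
    intros k. unfold u. apply Rmult_le_pos. apply Cmod_ge_0. apply pow_le; lra. lra. }
  assert ((1 + T)^2 <= 1 + 3 * T) by nra.
  lra.
Qed.
Lemma bern (r : R) n : 0 <= r <= 1 -> 1 - INR n * (1 - r) <= r ^ n.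
Proof.
  intros Hr. induction n.
  - simpl. lra.
  - rewrite S_INR. simpl.
    assert (r * (1 - INR n * (1 - r)) <= r * r ^ n) by (apply Rmult_le_compat_l; lra).
    pose proof (pos_INR n). assert (0 <= INR n * ((1-r)*(1-r))) by (apply Rmult_le_pos; nra). nra.
Qed.

Lemma coef3 (c : nat -> C) :
  (forall z, 0 < Cmod z < 1 -> exists W, Cser (fun n => z^n * c n)%C W /\ Cmod W <= 1) ->
  Cmod (c 1%nat)^2 + Cmod (c 2%nat)^2 + Cmod (c 3%nat)^2 <= 1.
Proof.
  intros Hc. apply Rnot_lt_le. intros Hs.
  set (s := Cmod (c 1%nat)^2 + Cmod (c 2%nat)^2 + Cmod (c 3%nat)^2) in *.
  assert (Hs0 : 0 < /s < 1).
  { split. apply Rinv_0_lt_compat. lra. rewrite <- Rinv_1. apply Rinv_lt_contravar; lra. }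
  set (r := 1 - (1 - / s) / 12).
  assert (Hr : 0 < r < 1) by (unfold r; lra).
  pose proof (coef3_r c r Hc Hr) as H.
  pose proof (bern r 6 ltac:(lra)) as B. simpl INR in B.
  assert (Hp : 0 < r^2 < 1) by (split; nra).
  replace (r^4) with ((r^2)^2) in H by ring. replace (r^6) with ((r^2)^3) in H, B by ring.
  set (p := r^2) in *.
  assert (Ha : 0 <= Cmod (c 1%nat)^2) by apply pow2_ge_0.
  assert (Hb : 0 <= Cmod (c 2%nat)^2) by apply pow2_ge_0.
  assert (Hd : 0 <= Cmod (c 3%nat)^2) by apply pow2_ge_0.
  assert (p^3 <= p^2) by (simpl; nra).
  assert (p^3 <= p) by (simpl; nra).
  assert (s * p^3 <= 1).
  { unfold s. eapply Rle_trans; [|exact H].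
    apply Rle_trans with (Cmod (c 1%nat)^2 * p^3 + Cmod (c 2%nat)^2 * p^3 + Cmod (c 3%nat)^2 * p^3). right; ring.
    apply Rplus_le_compat. apply Rplus_le_compat. apply Rmult_le_compat_l; auto. apply Rmult_le_compat_l; auto. lra. }
  assert (p^3 >= 1 - 6 * ((1 - /s)/12)) by (unfold r in B; lra).
  assert (s * (1 - 6 * ((1 - / s) / 12)) = (s + 1)/2) by (field; lra).
  nra.
Qed.
Definition CDK (F : C -> C) z D := is_derive (K:=C_AbsRing) (V:=AbsRing_NormedModule C_AbsRing) F z D.

Lemma CDK_of_eps F z D :
  (forall eps, 0 < eps -> exists del, 0 < del /\ forall h, Cmod h < del -> Cmod (F (z+h) - F z - h*D)%C <= eps * Cmod h) ->
  CDK F z D.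
Proof.
  intros H. split.
  - apply is_linear_scal_l.
  - intros x Hx. apply (is_filter_lim_locally_unique (K:=C_AbsRing) (V:=AbsRing_NormedModule C_AbsRing)) in Hx. subst x.
    intros [eps Heps]. destruct (H eps Heps) as [del [Hdel Hd]].
    assert (Hp : 0 < del / norm_factor (K:=C_AbsRing) (V:=AbsRing_NormedModule C_AbsRing)).
    { apply Rdiv_lt_0_compat; auto. apply norm_factor_gt_0. }
    exists (mkposreal _ Hp). intros y Hy. change C in y.
    pose proof (norm_compat2 (K:=C_AbsRing) (V:=AbsRing_NormedModule C_AbsRing) z y _ Hy) as Hn.
    simpl in Hn. replace (norm_factor * (del / norm_factor)) with del in Hn by (field; apply Rgt_not_eq, norm_factor_gt_0).
    specialize (Hd (y - z)%C).
    replace (z + (y - z))%C with y in Hd by ring.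
    change (Cmod (F y - F z - (y - z) * D)%C <= eps * Cmod (y - z)%C). apply Hd. exact Hn.
Qed.

Lemma CDK_eps F z D : CDK F z D ->
  forall eps, 0 < eps -> exists del, 0 < del /\ forall h, Cmod h < del -> Cmod (F (z+h) - F z - h*D)%C <= eps * Cmod h.
Proof.
  intros [_ H] eps Heps.
  specialize (H z (fun P HP => HP)). destruct (H (mkposreal eps Heps)) as [del Hdel].
  exists del. split. apply cond_pos. intros h Hh.
  specialize (Hdel (z + h)%C).
  assert (Hb : ball (M:=AbsRing_UniformSpace C_AbsRing) z del (z + h)%C).
  { apply (norm_compat1 (K:=C_AbsRing) (V:=AbsRing_NormedModule C_AbsRing)).
    change (Cmod (z + h - z)%C < del). replace (z + h - z)%C with h by ring. exact Hh. }
  specialize (Hdel Hb). simpl in Hdel.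
  change (Cmod (F (z + h) - F z - (z + h - z) * D)%C <= eps * Cmod (z + h - z)%C) in Hdel.
  replace (z + h - z)%C with h in Hdel by ring. exact Hdel.
Qed.

Lemma CD_CDK F z D : CD F z D <-> CDK F z D.
Proof. split; intros H. apply CDK_of_eps, CD_eps, H. apply CD_of_eps, CDK_eps, H. Qed.
Lemma CD_comp f g z df dg : CD f (g z) df -> CD g z dg -> CD (fun t => f (g t)) z (dg * df)%C.
Proof. intros Hf Hg. apply CD_CDK in Hg. exact (is_derive_comp f g z df dg Hf Hg). Qed.

Lemma CD_mult f g z df dg : CD f z df -> CD g z dg -> CD (fun t => f t * g t)%C z (df * g z + f z * dg)%C.
Proof. intros Hf Hg. apply CD_CDK in Hf. apply CD_CDK in Hg. apply CD_CDK. exact (is_derive_mult f g z df dg Hf Hg Cmult_comm). Qed.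

Lemma CD_id z : CD (fun t => t) z (RtoC 1).
Proof. apply CD_CDK. exact (is_derive_id (K:=C_AbsRing) z). Qed.

Lemma CD_const (a : C) z : CD (fun _ => a) z (RtoC 0).
Proof. exact (is_derive_const (K:=C_AbsRing) (V:=C_NormedModule) a z). Qed.

Lemma CD_ext_loc f g z D : (forall t, Cmod (t - z)%C < 1 - Cmod z -> f t = g t) -> Cmod z < 1 -> CD f z D -> CD g z D.
Proof.
  intros Hfg Hz Hf. apply (is_derive_ext_loc f g); auto.
  assert (Hp : 0 < (1 - Cmod z) / norm_factor (K:=C_AbsRing) (V:=AbsRing_NormedModule C_AbsRing)).
  { apply Rdiv_lt_0_compat. lra. apply norm_factor_gt_0. }
  exists (mkposreal _ Hp). intros y Hy. change C in y.
  pose proof (norm_compat2 (K:=C_AbsRing) (V:=AbsRing_NormedModule C_AbsRing) z y _ Hy) as Hn.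
  simpl in Hn. replace (norm_factor * ((1 - Cmod z) / norm_factor)) with (1 - Cmod z) in Hn by (field; apply Rgt_not_eq, norm_factor_gt_0).
  apply Hfg. exact Hn.
Qed.

Lemma CD_ne (f : C -> C) z D : CD f z D -> CD f z D. Proof. auto. Qed.
Lemma CD_scal2 g z dg : CD g z dg -> CD (fun t => RtoC 2 * g t)%C z (RtoC 2 * dg)%C.
Proof.
  intros Hg. pose proof (CD_mult (fun _ => RtoC 2) g z (RtoC 0) dg (CD_const _ z) Hg) as H.
  replace (RtoC 2 * dg)%C with (RtoC 0 * g z + RtoC 2 * dg)%C by ring. exact H.
Qed.

Theorem upper_bound (f : C -> C) (gam : nat -> C) : Su_star f -> log_coeffs f gam -> Cmod (H21 gam) <= 1 / 16.
Proof.
  intros [_ [_ [_ Hsu]]] [Hg0 Hlog].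
  set (Lf := PS gam).
  assert (HL : forall z, in_disk z -> is_pseries (K:=C_AbsRing) (V:=C_NormedModule) gam z (Lf z)).
  { intros z Hz. apply PS_spec. destruct (Hlog z Hz) as [L [E [H1 _]]]. exists L. exact H1. }
  assert (Hf : forall z, in_disk z -> f z = (Cexp (RtoC 2 * Lf z) * z)%C).
  { intros z Hz. destruct (Hlog z Hz) as [L [E [H1 [H2 H3]]]].
    assert (L = Lf z).
    { apply pseries_Cser in H1. pose proof (HL z Hz) as H4. apply pseries_Cser in H4. exact (Cser_unique _ _ _ H1 H4). }
    subst L. apply Cexp_is in H2. rewrite <- H3, H2. reflexivity. }
  set (c := fun n => (RtoC 2 * RtoC (INR n) * gam n)%C).
  assert (Hc : forall z, 0 < Cmod z < 1 -> exists W, Cser (fun n => z^n * c n)%C W /\ Cmod W <= 1).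
  { intros z Hz.
    assert (Hzd : in_disk z) by (unfold in_disk; lra).
    assert (Hz0 : z <> RtoC 0) by (intros E; rewrite E, Cmod_0 in Hz; lra).
    destruct (pseries_deriv gam 1 Lf z Rlt_0_1 HL ltac:(lra)) as [D [HD HCD]].
    exists (RtoC 2 * z * D)%C. split.
    - eapply Cser_ext; [|apply (Cser_scal (RtoC 2 * z)%C _ _ HD)].
      intros n. unfold c. destruct n. simpl. ring. simpl pred. change (z ^ S n)%C with (z * z ^ n)%C. ring.
    - destruct (Hsu z Hzd Hz0) as [Hfz [f'z [Hf' Hmod]]].
      set (E := Cexp (RtoC 2 * Lf z)).
      assert (HG : CD (fun t => Cexp (RtoC 2 * Lf t) * t)%C z (((RtoC 2 * D) * E) * z + E * RtoC 1)%C).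
      { apply (CD_mult (fun t => Cexp (RtoC 2 * Lf t)) (fun t => t)). 
        apply (CD_comp Cexp (fun t => RtoC 2 * Lf t)%C). apply Cexp_deriv. apply CD_scal2. exact HCD.
        apply CD_id. }
      assert (HG' : CD f z (((RtoC 2 * D) * E) * z + E * RtoC 1)%C).
      { refine (CD_ext_loc _ f z _ _ _ HG); [|lra].
        intros t Ht. symmetry. apply Hf. unfold in_disk.
        replace t with (z + (t - z))%C by ring. eapply Rle_lt_trans. apply Cmod_triangle. lra. }
      pose proof (CD_unique _ _ _ _ Hf' HG') as Ef. rewrite Ef in Hmod.
      rewrite (Hf z Hzd) in Hmod. fold E in Hmod.
      assert (HE : E <> RtoC 0).
      { intros HE0. apply Hfz. rewrite (Hf z Hzd). fold E. rewrite HE0. ring. }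
      replace (z * (RtoC 2 * D * E * z + E * RtoC 1) / (E * z) - 1)%C with (RtoC 2 * z * D)%C in Hmod.
      lra. field. split; auto. }
  pose proof (coef3 c Hc) as Hb.
  assert (E1 : c 1%nat = (RtoC 2 * gam 1%nat)%C) by (unfold c; simpl; ring).
  assert (E2 : c 2%nat = (RtoC 4 * gam 2%nat)%C) by (unfold c; rewrite <- RtoC_mult; f_equal; f_equal; simpl; ring).
  assert (E3 : c 3%nat = (RtoC 6 * gam 3%nat)%C) by (unfold c; rewrite <- RtoC_mult; f_equal; f_equal; simpl; ring).
  rewrite E1, E2, E3, !Cmod_mult, !Cmod_R, !Rabs_pos_eq in Hb by lra.
  unfold H21.
  pose proof (Cmod_ge_0 (gam 1%nat)). pose proof (Cmod_ge_0 (gam 2%nat)). pose proof (Cmod_ge_0 (gam 3%nat)).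
  eapply Rle_trans. apply Cmod_triangle. rewrite Cmod_opp, !Cmod_mult.
  nra.
Qed.
Lemma RtoC_nz (x : R) : x <> 0 -> RtoC x <> RtoC 0.
Proof. intros H E. injection E. auto. Qed.

Lemma Cser_sparse (u v : nat -> C) l :
  (forall k, v (2 * k + 1)%nat = u k) -> (forall k, v (2 * k)%nat = RtoC 0) -> Cser u l -> Cser v l.
Proof.
  intros Hodd Hev Hu.
  assert (P : forall k, sum_n v (2 * k + 1)%nat = sum_n u k).
  { induction k.
    - simpl. rewrite sum_Sn, !sum_O. specialize (Hodd 0%nat). specialize (Hev 0%nat). simpl in Hodd, Hev.
      rewrite Hodd, Hev. change (RtoC 0 + u 0%nat = u 0%nat)%C. ring.
    - replace (2 * S k + 1)%nat with (S (S (2 * k + 1))) by lia. rewrite !sum_Sn, IHk.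
      replace (S (S (2 * k + 1))) with (2 * S k + 1)%nat by lia. rewrite Hodd.
      replace (S (2 * k + 1)) with (2 * S k)%nat by lia. rewrite Hev.
      change (sum_n u k + RtoC 0 + u (S k) = sum_n u k + u (S k))%C. ring. }
  apply Cser_of_eps. intros eps Heps.
  destruct (Cser_eps u l Hu eps Heps) as [N HN].
  exists (2 * N + 1)%nat. intros n Hn.
  destruct (Nat.Even_or_Odd n) as [[k Hk]|[k Hk]]; subst n.
  - destruct k. lia.
    replace (2 * S k)%nat with (S (2 * k + 1)) by lia. rewrite sum_Sn, P.
    replace (S (2 * k + 1)) with (2 * S k)%nat by lia. rewrite Hev.
    change (Cmod (sum_n u k + RtoC 0 - l)%C < eps).
    replace (sum_n u k + RtoC 0 - l)%C with (sum_n u k - l)%C by ring. apply HN. lia.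
  - rewrite P. apply HN. lia.
Qed.

Definition gex (t : C) : C := (RtoC (1/2) * (t * t))%C.
Definition fex (t : C) : C := (Cexp (gex t) * t)%C.
Definition gamex (n : nat) : C := match n with 2%nat => RtoC (1/4) | _ => RtoC 0 end.
Definition aex (n : nat) : C :=
  match n with O => RtoC 0 | S m => if Nat.even m then (RtoC ((/2) ^ (Nat.div2 m)) * ecoef (Nat.div2 m))%C else RtoC 0 end.

Lemma fex_analytic : analytic_on_disk fex.
Proof.
  exists aex. intros z _. apply pseries_Cser.
  replace (fex z) with (z * Cexp (gex z))%C by (unfold fex; ring).
  apply (Cser_sparse (fun k => z * ((gex z) ^ k * ecoef k))%C).
  - intros k. replace (2 * k + 1)%nat with (S (2 * k)) by lia. unfold aex. rewrite Nat.even_even, Nat.div2_double.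
    unfold gex. rewrite Cpow_S, Cpow_mult_l, Cpow_mult_r, <- RtoC_pow.
    replace (1/2) with (/2) by field. replace (z ^ 2)%C with (z * z)%C by (simpl; ring). ring.
  - intros k. destruct k. simpl. ring. replace (2 * S k)%nat with (S (2 * k + 1)) by lia.
    unfold aex. rewrite Nat.even_odd. ring.
  - apply Cser_scal. apply Cexp_spec.
Qed.

Lemma gex_deriv z : CD gex z (z)%C.
Proof.
  pose proof (CD_mult (fun _ => RtoC (1/2)) (fun t => t * t)%C z (RtoC 0) (RtoC 1 * z + z * RtoC 1)%C (CD_const _ z)
                (CD_mult (fun t => t) (fun t => t) z _ _ (CD_id z) (CD_id z))) as H.
  assert (E : (RtoC 0 * (z * z) + RtoC (1 / 2) * (RtoC 1 * z + z * RtoC 1))%C = z).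
  { rewrite RtoC_div by lra. field; try (apply RtoC_nz; lra). }
  cbv beta in H. rewrite E in H. exact H.
Qed.
Lemma fex_deriv z : CD fex z ((z * Cexp (gex z)) * z + Cexp (gex z) * RtoC 1)%C.
Proof.
  apply (CD_mult (fun t => Cexp (gex t)) (fun t => t)).
  apply (CD_comp Cexp gex). apply Cexp_deriv. apply gex_deriv. apply CD_id.
Qed.

Lemma Cexp_ne0 u : Cmod u < 1/2 -> Cexp u <> RtoC 0.
Proof.
  intros Hu E. pose proof (Cexp_near1 u ltac:(lra)) as H. rewrite E in H.
  replace (RtoC 0 - 1)%C with (RtoC (-1)) in H by (unfold RtoC, Cminus, Cplus, Copp; simpl; f_equal; ring).
  rewrite Cmod_R, Rabs_left in H by lra.
  pose proof (Cmod_ge_0 u).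
  assert (Cmod u / (1 - Cmod u) < 1).
  { apply (Rmult_lt_reg_r (1 - Cmod u)). lra. unfold Rdiv. rewrite Rmult_assoc, Rinv_l by lra. lra. }
  lra.
Qed.

Lemma gex_mod z : Cmod (gex z) = Cmod z ^ 2 / 2.
Proof. unfold gex. rewrite !Cmod_mult, Cmod_R, Rabs_pos_eq by lra. simpl. field. Qed.

Lemma gex_0 : gex (RtoC 0) = RtoC 0.
Proof. unfold gex. ring. Qed.

Lemma fex_Su : Su_star fex.
Proof.
  split; [apply fex_analytic|]. split; [unfold fex; ring|]. split.
  - pose proof (fex_deriv (RtoC 0)) as H. rewrite gex_0, Cexp_0 in H.
    replace (RtoC 0 * RtoC 1 * RtoC 0 + RtoC 1 * RtoC 1)%C with (RtoC 1) in H by ring. exact H.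
  - intros z Hz Hz0. unfold in_disk in Hz.
    assert (Hg : Cmod (gex z) < 1/2).
    { rewrite gex_mod. pose proof (Cmod_ge_0 z). nra. }
    pose proof (Cexp_ne0 _ Hg) as HE.
    assert (Hpos : 0 < Cmod (fex z)).
    { unfold fex. rewrite Cmod_mult. apply Rmult_lt_0_compat; apply Cmod_gt_0; auto. }
    assert (Hf : fex z <> RtoC 0) by (intros E; rewrite E, Cmod_0 in Hpos; lra).
    split; auto.
    eexists. split. apply fex_deriv.
    replace (z * (z * Cexp (gex z) * z + Cexp (gex z) * RtoC 1) / fex z - 1)%C with (z * z)%C.
    rewrite Cmod_mult. pose proof (Cmod_ge_0 z). nra.
    unfold fex. field. auto.
Qed.

Lemma fex_log : log_coeffs fex gamex.
Proof.
  split. reflexivity.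
  intros z _. exists (RtoC (1/4) * (z * z))%C, (Cexp (gex z)). split; [|split].
  - apply pseries_Cser.
    assert (H : Cser (fun n => z ^ n * gamex n)%C (sum_n (fun n => z ^ n * gamex n)%C 2)).
    { apply (series_fin (K:=C_AbsRing) (V:=C_NormedModule)). intros n Hn.
      destruct n as [|[|[|n]]]; try lia. simpl. transitivity (RtoC 0). ring. reflexivity. }
    rewrite <- Csum_sum_n in H. simpl in H.
    replace (RtoC (1/4) * (z * z))%C with (1 * RtoC 0 + z * 1 * RtoC 0 + z * (z * 1) * RtoC (1 / 4))%C by ring.
    exact H.
  - replace (2 * (RtoC (1 / 4) * (z * z)))%C with (gex z).
    apply PS_spec. apply ecoef_conv.
    unfold gex. rewrite !RtoC_div by lra. field; try (apply RtoC_nz; lra).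
  - reflexivity.
Qed.

Lemma fex_H21 : Cmod (H21 gamex) = 1 / 16.
Proof.
  unfold H21, gamex.
  replace (RtoC 0 * RtoC 0 - RtoC (1 / 4) * RtoC (1 / 4))%C with (RtoC (- (1/16))).
  rewrite Cmod_R, Rabs_left by lra. field.
  rewrite !RtoC_div by lra. rewrite RtoC_opp, RtoC_div by lra. field; try (apply RtoC_nz; lra).
Qed.

Theorem mainTheorem3 :
  (forall (f : C -> C) (gam : nat -> C),
      Su_star f -> log_coeffs f gam -> Cmod (H21 gam) <= 1 / 16) /\
  (exists (f : C -> C) (gam : nat -> C),
      Su_star f /\ log_coeffs f gam /\ Cmod (H21 gam) = 1 / 16).
Proof.
  split.
  - exact upper_bound.
  - exists fex, gamex. split; [exact fex_Su|]. split; [exact fex_log|exact fex_H21].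
Qed.
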